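(* Let $L$ be a precompact Hausdorff co-Heyting algebra. Then the set $\mathcal I^{!\vee}(L)$ of completely join irreducible elements and the set $\mathcal I^{!\wedge}(L)$ of completely meet irreducible elements generate the same co-Heyting subalgebra of $L$ (substructure for $0,1,\vee,\wedge,-$), and this subalgebra is the smallest co-Heyting subalgebra of $L$ that is dense in $L$ for the codimetric topology.
   Context: A co-Heyting algebra is a bounded distributive lattice $(L,0,1,\vee,\wedge)$ such that $a-b=\min\{c\in L: a\le b\vee c\}$ exists for all $a,b$. Let $a\triangle b=(a-b)\vee(b-a)$; for an ideal $I$, $L/I$ is the quotient by $a\equiv_I b\iff a\triangle b\in I$. $\operatorname{Spec}L$ is the set of prime filters ordered by inclusion; height = foundation rank there; $\operatorname{codim}_La=\min\{\operatorname{height}\mathfrak p: a\in\mathfrak p\}$ ($+\infty$ if none); $dL=\{a:\operatorname{codim}_La\ge d\}$. The codimetric pseudometric is $\operatorname{dist}_L(a,b)=2^{-\operatorname{codim}_L(a\triangle b)}$ if finite, $0$ otherwise; the codimetric topology is the one it defines. $L$ is Hausdorff if every nonzero element has finite codimension; precompact if $L/dL$ is finite for every positive integer $d$. $x\ne0$ is completely join irreducible if $x\le\bigvee A$ implies $x\le a$ for some $a\in A$; $x\ne1$ is completely meet irreducible if $\bigwedge A\le x$ implies $a\le x$ for some $a\in A$. *)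

(* Defs.v *)
From Stdlib Require Import List.
Set Implicit Arguments.

(** Co-Heyting algebra: bounded distributive lattice with a difference
    a - b = min {c | a <= b \/ c}, axiomatised by the Galois law
    a <= b \/ c  <->  a - b <= c. *)
Record coHeyting := CoHeyting {
  carrier :> Type;
  bot : carrier;
  top : carrier;
  join : carrier -> carrier -> carrier;
  meet : carrier -> carrier -> carrier;
  sub : carrier -> carrier -> carrier;
  joinC : forall a b, join a b = join b a;
  joinA : forall a b c, join a (join b c) = join (join a b) c;
  meetC : forall a b, meet a b = meet b a;
  meetA : forall a b c, meet a (meet b c) = meet (meet a b) c;
  join_meetK : forall a b, join a (meet a b) = a;
  meet_joinK : forall a b, meet a (join a b) = a;
  meet_joinDr : forall a b c, meet a (join b c) = join (meet a b) (meet a c);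
  join_bot : forall a, join a bot = a;
  meet_top : forall a, meet a top = a;
  sub_spec : forall a b c, meet a (join b c) = a <-> meet (sub a b) c = sub a b
}.

Arguments bot {_}.
Arguments top {_}.
Arguments join {_} _ _.
Arguments meet {_} _ _.
Arguments sub {_} _ _.

Section Defs.
Variable L : coHeyting.

Definition le (a b : L) : Prop := meet a b = a.

Definition sdiff (a b : L) : L := join (sub a b) (sub b a).

Definition is_prime_filter (p : L -> Prop) : Prop :=
  p (@top L) /\ ~ p (@bot L) /\
  (forall a b, p a -> le a b -> p b) /\
  (forall a b, p a -> p b -> p (meet a b)) /\
  (forall a b, p (join a b) -> p a \/ p b).

Definition strict_incl (q p : L -> Prop) : Prop :=
  (forall x, q x -> p x) /\ exists x, p x /\ ~ q x.

(** height_ge p d : the foundation rank of p in Spec L is >= d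
    (for finite d this is equivalent to the existence of a strict chain
    q_0 < q_1 < ... < q_d = p of prime filters; points of infinite rank,
    including those with non-well-founded down-set, satisfy it for all d). *)
Fixpoint height_ge (p : L -> Prop) (d : nat) : Prop :=
  match d with
  | O => True
  | S n => exists q, is_prime_filter q /\ strict_incl q p /\ height_ge q n
  end.

(** codim_L a >= d  (the min over an empty set being +oo) *)
Definition codim_ge (a : L) (d : nat) : Prop :=
  forall p, is_prime_filter p -> p a -> height_ge p d.

Definition codim_finite (a : L) : Prop := exists d, ~ codim_ge a d.

Definition hausdorff : Prop := forall a : L, a <> @bot L -> codim_finite a.

(** dL = {a | codim a >= d}; L/dL is finite: finitely many classes
    for a ==_I b <-> a △ b \in I *)
Definition quotient_finite (I : L -> Prop) : Prop :=
  exists xs : list L, forall a, exists x, List.In x xs /\ I (sdiff a x).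

Definition precompact : Prop :=
  forall d, 0 < d -> quotient_finite (fun a => codim_ge a d).

Definition is_sup (A : L -> Prop) (s : L) : Prop :=
  (forall a, A a -> le a s) /\ (forall u, (forall a, A a -> le a u) -> le s u).
Definition is_inf (A : L -> Prop) (s : L) : Prop :=
  (forall a, A a -> le s a) /\ (forall u, (forall a, A a -> le u a) -> le u s).

Definition completely_join_irreducible (x : L) : Prop :=
  x <> @bot L /\
  forall (A : L -> Prop) s, is_sup A s -> le x s -> exists a, A a /\ le x a.

Definition completely_meet_irreducible (x : L) : Prop :=
  x <> @top L /\
  forall (A : L -> Prop) s, is_inf A s -> le s x -> exists a, A a /\ le a x.

Definition is_subalgebra (S : L -> Prop) : Prop :=
  S (@bot L) /\ S (@top L) /\
  (forall a b, S a -> S b -> S (join a b)) /\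
  (forall a b, S a -> S b -> S (meet a b)) /\
  (forall a b, S a -> S b -> S (sub a b)).

Inductive generated (X : L -> Prop) : L -> Prop :=
  | gen_base : forall x, X x -> generated X x
  | gen_bot : generated X (@bot L)
  | gen_top : generated X (@top L)
  | gen_join : forall a b, generated X a -> generated X b -> generated X (join a b)
  | gen_meet : forall a b, generated X a -> generated X b -> generated X (meet a b)
  | gen_sub : forall a b, generated X a -> generated X b -> generated X (sub a b).

(** S is dense for the codimetric topology: every open ball
    {b | dist(a,b) < eps} meets S; since dist(a,b) < 2^-d iff
    codim(a △ b) >= d+1 (or is infinite), this is: *)
Definition codim_dense (S : L -> Prop) : Prop :=
  forall (a : L) (d : nat), exists s, S s /\ codim_ge (sdiff a s) d.

End Defs.

(* Main.v *)
Require Import Defs.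
From Stdlib Require Import List Classical Lia Arith PeanoNat.
From mathcomp Require classical_sets.
Set Implicit Arguments.
Arguments le {L}. Arguments sdiff {L}. Arguments codim_ge {L}. Arguments height_ge {L}.
Arguments is_prime_filter {L}. Arguments strict_incl {L}. Arguments is_sup {L}. Arguments is_inf {L}.
Arguments codim_finite {L}. Arguments quotient_finite {L}.
Arguments joinC {_}. Arguments joinA {_}. Arguments meetC {_}. Arguments meetA {_}.
Arguments join_meetK {_}. Arguments meet_joinK {_}. Arguments meet_joinDr {_}.
Arguments join_bot {_}. Arguments meet_top {_}. Arguments sub_spec {_}.



Lemma meet_idem {L : coHeyting} (a : L) : meet a a = a.
Proof. rewrite <- (join_meetK a a) at 2. apply meet_joinK. Qed.
Lemma join_idem {L : coHeyting} (a : L) : join a a = a.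
Proof. rewrite <- (meet_joinK a a) at 2. apply join_meetK. Qed.
Lemma le_refl {L : coHeyting} (a : L) : le a a.
Proof. apply meet_idem. Qed.
Lemma le_trans {L : coHeyting} (a b c : L) : le a b -> le b c -> le a c.
Proof.
  unfold le; intros H1 H2. transitivity (meet (meet a b) c).
  - rewrite H1; reflexivity.
  - rewrite <- meetA, H2; exact H1.
Qed.
Lemma le_antisym {L : coHeyting} (a b : L) : le a b -> le b a -> a = b.
Proof. unfold le; intros H1 H2. rewrite <- H1, meetC. exact H2. Qed.
Lemma le_join_iff {L : coHeyting} (a b : L) : le a b <-> join a b = b.
Proof.
  unfold le; split; intro H.
  - rewrite <- H, joinC, meetC. apply join_meetK.
  - rewrite <- H. apply meet_joinK.
Qed.
Lemma le_joinl {L : coHeyting} (a b : L) : le a (join a b).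
Proof. apply meet_joinK. Qed.
Lemma le_joinr {L : coHeyting} (a b : L) : le b (join a b).
Proof. rewrite joinC; apply le_joinl. Qed.
Lemma join_lub {L : coHeyting} (a b c : L) : le a c -> le b c -> le (join a b) c.
Proof.
  intros H1 H2. apply le_join_iff. rewrite <- joinA.
  rewrite (proj1 (le_join_iff b c) H2). apply le_join_iff; auto.
Qed.
Lemma le_meetl {L : coHeyting} (a b : L) : le (meet a b) a.
Proof. unfold le; rewrite meetC, meetA, meet_idem; reflexivity. Qed.
Lemma le_meetr {L : coHeyting} (a b : L) : le (meet a b) b.
Proof. rewrite meetC; apply le_meetl. Qed.
Lemma meet_glb {L : coHeyting} (a b c : L) : le c a -> le c b -> le c (meet a b).
Proof. unfold le; intros H1 H2; rewrite meetA, H1, H2; reflexivity. Qed.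
Lemma le_bot {L : coHeyting} (a : L) : le bot a.
Proof. apply le_join_iff; rewrite joinC; apply join_bot. Qed.
Lemma le_top {L : coHeyting} (a : L) : le a top.
Proof. apply meet_top. Qed.
Lemma join_mono {L : coHeyting} (a a' b b' : L) : le a a' -> le b b' -> le (join a b) (join a' b').
Proof.
  intros; apply join_lub.
  - eapply le_trans; [eassumption|apply le_joinl].
  - eapply le_trans; [eassumption|apply le_joinr].
Qed.
Lemma meet_mono {L : coHeyting} (a a' b b' : L) : le a a' -> le b b' -> le (meet a b) (meet a' b').
Proof.
  intros; apply meet_glb.
  - eapply le_trans; [apply le_meetl|eassumption].
  - eapply le_trans; [apply le_meetr|eassumption].
Qed.
Lemma galois {L : coHeyting} (a b c : L) : le (sub a b) c <-> le a (join b c).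
Proof. unfold le; split; intro H; apply sub_spec; auto. Qed.
Lemma le_sub_join {L : coHeyting} (a b : L) : le a (join b (sub a b)).
Proof. apply galois, le_refl. Qed.
Lemma sub_monol {L : coHeyting} (a a' b : L) : le a a' -> le (sub a b) (sub a' b).
Proof. intro H; apply galois. eapply le_trans; [eassumption|apply le_sub_join]. Qed.
Lemma sub_antir {L : coHeyting} (a b b' : L) : le b b' -> le (sub a b') (sub a b).
Proof.
  intro H; apply galois. eapply le_trans; [apply (le_sub_join a b)|].
  apply join_mono; auto using le_refl.
Qed.
Lemma sub_bot_le {L : coHeyting} (a b : L) : le (sub a b) bot -> le a b.
Proof. intro H. apply galois in H. rewrite join_bot in H. exact H. Qed.
Lemma sub_eq_bot {L : coHeyting} (a b : L) : le a b -> sub a b = bot.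
Proof.
  intro H. apply le_antisym; [|apply le_bot]. apply galois. rewrite join_bot. exact H.
Qed.
Lemma le_sub_l {L : coHeyting} (a b : L) : le (sub a b) a.
Proof. apply galois, le_joinr. Qed.
Lemma sub_tri {L : coHeyting} (a b c : L) : le (sub a c) (join (sub a b) (sub b c)).
Proof.
  apply galois. eapply le_trans; [apply (le_sub_join a b)|]. apply join_lub.
  - eapply le_trans; [apply (le_sub_join b c)|]. apply join_lub.
    + apply le_joinl.
    + eapply le_trans; [|apply le_joinr]. apply le_joinr.
  - eapply le_trans; [|apply le_joinr]. apply le_joinl.
Qed.

Lemma pf_top {L : coHeyting} {p : L -> Prop} : is_prime_filter p -> p top.
Proof. intros H; apply H. Qed.
Lemma pf_bot {L : coHeyting} {p : L -> Prop} : is_prime_filter p -> ~ p bot.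
Proof. intros H; apply H. Qed.
Lemma pf_up {L : coHeyting} {p : L -> Prop} {a b} : is_prime_filter p -> p a -> le a b -> p b.
Proof. intros H; apply H. Qed.
Lemma pf_meet {L : coHeyting} {p : L -> Prop} {a b} : is_prime_filter p -> p a -> p b -> p (meet a b).
Proof. intros H; apply H. Qed.
Lemma pf_prime {L : coHeyting} {p : L -> Prop} {a b} : is_prime_filter p -> p (join a b) -> p a \/ p b.
Proof. intros H; apply H. Qed.
Lemma pf_split {L : coHeyting} {p : L -> Prop} {a b} : is_prime_filter p -> p a -> p b \/ p (sub a b).
Proof. intros H Ha. apply (pf_prime H). eapply pf_up; eauto. apply le_sub_join. Qed.

Lemma ht_S {L : coHeyting} d : forall (p : L -> Prop), height_ge p (S d) -> height_ge p d.
Proof.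
  induction d as [|d IH]; intros p H; simpl; auto.
  destruct H as [q [Hq [Hs Hh]]]. exists q; auto.
Qed.
Lemma ht_mono {L : coHeyting} (p : L -> Prop) d d' : d' <= d -> height_ge p d -> height_ge p d'.
Proof.
  intros Hle; induction d as [|d IH]; intro H.
  - replace d' with 0 by lia; exact H.
  - destruct (Nat.eq_dec d' (S d)) as [->|Hn]; auto.
    apply IH; [lia|apply ht_S; auto].
Qed.
Lemma ht_sub {L : coHeyting} d : forall (p q : L -> Prop), (forall x, q x -> p x) -> height_ge q d -> height_ge p d.
Proof.
  destruct d as [|d]; intros p q Hqp H; simpl; auto.
  destruct H as [r [Hr [[Hrq [x [Hx1 Hx2]]] Hh]]].
  exists r; split; [exact Hr|split; [split; [auto|exists x; auto]|exact Hh]].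
Qed.

Lemma codim_le {L : coHeyting} (a b : L) d : le a b -> codim_ge b d -> codim_ge a d.
Proof. intros H Hb p Hp Ha. apply Hb; auto. eapply pf_up; eauto. Qed.
Lemma codim_join {L : coHeyting} (a b : L) d : codim_ge a d -> codim_ge b d -> codim_ge (join a b) d.
Proof. intros Ha Hb p Hp Hab. destruct (pf_prime Hp Hab); auto. Qed.
Lemma codim_0 {L : coHeyting} (a : L) : codim_ge a 0.
Proof. intros p _ _; simpl; auto. Qed.
Lemma codim_bot {L : coHeyting} d : codim_ge (@bot L) d.
Proof. intros p Hp H. exfalso; eapply pf_bot; eauto. Qed.
Lemma sdiff_l {L : coHeyting} (a b : L) d : codim_ge (sdiff a b) d -> codim_ge (sub a b) d.
Proof. intro H; eapply codim_le; [apply le_joinl|exact H]. Qed.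
Lemma sdiff_r {L : coHeyting} (a b : L) d : codim_ge (sdiff a b) d -> codim_ge (sub b a) d.
Proof. intro H; eapply codim_le; [apply le_joinr|exact H]. Qed.


Definition goodf {L : coHeyting} (F J G : L -> Prop) : Prop :=
  (forall a b, G a -> le a b -> G b) /\ (forall a b, G a -> G b -> G (meet a b)) /\
  (forall a, F a -> G a) /\ (forall a, G a -> J a -> False).

Lemma pft {L : coHeyting} (F J : L -> Prop) :
  (forall a b, F a -> le a b -> F b) -> (forall a b, F a -> F b -> F (meet a b)) ->
  (exists a, F a) ->
  (forall a b, J a -> le b a -> J b) -> (forall a b, J a -> J b -> J (join a b)) -> J bot ->
  (forall a, F a -> J a -> False) ->
  exists Q, is_prime_filter Q /\ (forall a, F a -> Q a) /\ (forall a, Q a -> J a -> False).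
Proof.
  intros Fup Fmeet [a00 Fa0] Jdown Jjoin Jbot FJ.
  pose (P := fun G : L -> Prop => (forall x, ~ G x) \/ goodf F J G).
  destruct (@classical_sets.Zorn_bigcup L P) as [A [PA Amax]].
  - intros Fam HFP Htot.
    destruct (classic (exists x X, Fam X /\ X x)) as [[x [X [FX Xx]]]|Hno].
    + right.
      assert (Hg : forall Y y, Fam Y -> Y y -> goodf F J Y).
      { intros Y y FY Yy. destruct (HFP Y FY) as [H|H]; [exfalso; eapply H; eauto|exact H]. }
      unfold goodf, classical_sets.bigcup; simpl.
      split; [|split; [|split]].
      * intros u v [Y FY Ya] Hab. exists Y; auto. destruct (Hg Y u FY Ya) as [G1 _]. eauto.
      * intros u v [Y1 FY1 Ya] [Y2 FY2 Yb].
        destruct (Htot Y1 Y2 FY1 FY2) as [H|H].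
        -- exists Y2; auto. destruct (Hg Y2 v FY2 Yb) as [_ [G2 _]]. apply G2; auto.
        -- exists Y1; auto. destruct (Hg Y1 u FY1 Ya) as [_ [G2 _]]. apply G2; auto.
      * intros u Fu. exists X; auto. destruct (Hg X x FX Xx) as [_ [_ [G3 _]]]. auto.
      * intros u [Y FY Ya] Ju. destruct (Hg Y u FY Ya) as [_ [_ [_ G4]]]. eauto.
    + left. intros x [Y FY Yx]. apply Hno; eauto.
  - assert (gA : goodf F J A).
    { destruct PA as [HA|HA]; auto. exfalso. apply (Amax F).
      - split; [intros t Ht; exfalso; eapply HA; eauto|]. intro H. eapply HA; eauto.
      - right. split; [|split; [|split]]; eauto. }
    destruct gA as [Aup [Ameet [FA AJ]]].
    exists A. split; [|split; auto].
    split; [|split; [|split; [|split]]]; auto.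
    + apply Aup with a00; auto. apply le_top.
    + intro Ab; eauto.
    + intros a b Hab. apply NNPP; intro Hn. apply not_or_and in Hn; destruct Hn as [Na Nb].
      assert (Hext : forall c, ~ A c -> exists g z, A g /\ le (meet g c) z /\ J z).
      { intros c Nc. pose (B := fun z => exists g, A g /\ le (meet g c) z).
        apply NNPP; intro Hn. apply (Amax B).
        - split.
          + intros t At. exists t; split; auto. apply le_meetl.
          + intro H. apply Nc, H. exists top; split; [apply Aup with a00; auto; apply le_top|].
            rewrite meetC, meet_top. apply le_refl.
        - right. split; [|split; [|split]].
          + intros x y [g [Ag Hg]] Hxy. exists g; split; auto. eapply le_trans; eauto.
          + intros x y [g1 [Ag1 H1]] [g2 [Ag2 H2]]. exists (meet g1 g2); split; auto.
            apply meet_glb.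
            * eapply le_trans; [|exact H1]. apply meet_mono; [apply le_meetl|apply le_refl].
            * eapply le_trans; [|exact H2]. apply meet_mono; [apply le_meetr|apply le_refl].
          + intros x Fx. exists x; split; auto. apply le_meetl.
          + intros x [g [Ag Hg]] Jx. apply Hn. exists g, x; auto. }
      destruct (Hext a Na) as [g1 [z1 [Ag1 [H1 J1]]]].
      destruct (Hext b Nb) as [g2 [z2 [Ag2 [H2 J2]]]].
      apply (AJ (meet (meet g1 g2) (join a b))).
      * apply Ameet; auto.
      * apply Jdown with (join z1 z2); auto.
        rewrite meet_joinDr. apply join_mono.
        -- eapply le_trans; [|exact H1]. apply meet_mono; [apply le_meetl|apply le_refl].
        -- eapply le_trans; [|exact H2]. apply meet_mono; [apply le_meetr|apply le_refl].
Qed.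

Lemma gen_lemma {L : coHeyting} (g : L -> Prop) (b c : L) :
  is_prime_filter g -> g (sub b c) ->
  exists g', is_prime_filter g' /\ (forall x, g' x -> g x) /\ g' (sub b c) /\ ~ g' c.
Proof.
  intros Hg Hb.
  destruct (@pft L (fun z => le (sub b c) z) (fun z => exists u, ~ g u /\ le z (join u c)))
    as [Q [HQ [FQ QJ]]].
  - intros; eapply le_trans; eauto.
  - intros; apply meet_glb; auto.
  - exists (sub b c); apply le_refl.
  - intros x y [u [Hu Hx]] Hyx. exists u; split; auto. eapply le_trans; eauto.
  - intros x y [u [Hu Hx]] [v [Hv Hy]]. exists (join u v); split.
    + intro H; destruct (pf_prime Hg H); auto.
    + apply join_lub.
      * eapply le_trans; [exact Hx|]. apply join_mono; [apply le_joinl|apply le_refl].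
      * eapply le_trans; [exact Hy|]. apply join_mono; [apply le_joinr|apply le_refl].
  - exists bot; split; [apply pf_bot; auto|apply le_bot].
  - intros x Hx [u [Hu Hxu]]. apply Hu. apply (pf_up (a:=sub b c)); auto.
    apply galois. eapply le_trans; [apply (le_sub_join b c)|].
    apply join_lub; [apply le_joinl|]. eapply le_trans; [exact Hx|]. eapply le_trans; [exact Hxu|].
    apply join_lub; [apply le_joinr|apply le_joinl].
  - exists Q; split; [exact HQ|split; [|split]].
    + intros x Qx. apply NNPP; intro Nx. apply (QJ x Qx). exists x; split; auto. apply le_joinl.
    + apply FQ, le_refl.
    + intro Qc. apply (QJ c Qc). exists bot; split; [apply pf_bot; auto|apply le_joinr].
Qed.


Lemma pick_max {L : coHeyting} D (U : L -> Prop) :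
  quotient_finite (fun a : L => codim_ge a D) -> U bot ->
  (forall a b, U a -> U b -> U (join a b)) ->
  exists c, U c /\ forall z, U z -> codim_ge (sub z c) D.
Proof.
  intros [xs Hxs] Ubot Ujoin.
  assert (H : forall l, exists c, U c /\ forall r, In r l -> forall z, U z ->
             codim_ge (sdiff z r) D -> codim_ge (sub z c) D).
  { induction l as [|r l IH].
    - exists bot; split; auto. intros r [].
    - destruct IH as [c0 [Uc0 Hc0]].
      destruct (classic (exists z0, U z0 /\ codim_ge (sdiff z0 r) D)) as [[z0 [Uz0 Hz0]]|Hno].
      + exists (join c0 z0); split; auto.
        intros r' [<-|Hr'] z Uz Hz.
        * eapply codim_le; [apply sub_antir, le_joinr|].
          eapply codim_le; [apply (sub_tri z r z0)|].
          apply codim_join; [apply sdiff_l; auto|apply sdiff_r; auto].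
        * eapply codim_le; [apply sub_antir, le_joinl|]. eauto.
      + exists c0; split; auto. intros r' [<-|Hr'] z Uz Hz; eauto.
        exfalso; apply Hno; eauto. }
  destruct (H xs) as [c [Uc Hc]]. exists c; split; auto.
  intros z Uz. destruct (Hxs z) as [r [Hr Hzr]]. eauto.
Qed.

Lemma pick_min {L : coHeyting} D (U : L -> Prop) :
  quotient_finite (fun a : L => codim_ge a D) -> U top ->
  (forall a b, U a -> U b -> U (meet a b)) ->
  exists c, U c /\ forall z, U z -> codim_ge (sub c z) D.
Proof.
  intros [xs Hxs] Utop Umeet.
  assert (H : forall l, exists c, U c /\ forall r, In r l -> forall z, U z ->
             codim_ge (sdiff z r) D -> codim_ge (sub c z) D).
  { induction l as [|r l IH].
    - exists top; split; auto. intros r [].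
    - destruct IH as [c0 [Uc0 Hc0]].
      destruct (classic (exists z0, U z0 /\ codim_ge (sdiff z0 r) D)) as [[z0 [Uz0 Hz0]]|Hno].
      + exists (meet c0 z0); split; auto.
        intros r' [<-|Hr'] z Uz Hz.
        * eapply codim_le; [apply sub_monol, le_meetr|].
          eapply codim_le; [apply (sub_tri z0 r z)|].
          apply codim_join; [apply sdiff_l; auto|apply sdiff_r; auto].
        * eapply codim_le; [apply sub_monol, le_meetl|]. eauto.
      + exists c0; split; auto. intros r' [<-|Hr'] z Uz Hz; eauto.
        exfalso; apply Hno; eauto. }
  destruct (H xs) as [c [Uc Hc]]. exists c; split; auto.
  intros z Uz. destruct (Hxs z) as [r [Hr Hzr]]. eauto.
Qed.

Definition incl {L : coHeyting} (p q : L -> Prop) := forall x, p x -> q x.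

Lemma descent {L : coHeyting} (xi : L -> Prop) m : forall g : L -> Prop,
  is_prime_filter g -> ~ height_ge g m -> ~ incl g xi ->
  exists r, is_prime_filter r /\ incl r g /\ ~ incl r xi /\
    forall q, is_prime_filter q -> strict_incl q r -> incl q xi.
Proof.
  induction m as [|k IH]; intros g Hg Hh Hn.
  - exfalso; apply Hh; simpl; auto.
  - destruct (classic (exists q, is_prime_filter q /\ strict_incl q g /\ ~ incl q xi))
      as [[q [Hq [Hqg Hqn]]]|Hno].
    + assert (Hqh : ~ height_ge q k) by (intro H; apply Hh; simpl; exists q; auto).
      destruct (IH q Hq Hqh Hqn) as [r [Hr [Hrq [Hrn Hrm]]]].
      exists r; split; auto; split; auto. intros x Hx; apply Hqg, Hrq, Hx.
    + exists g; split; auto; split; [intros x Hx; exact Hx|split; auto].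
      intros q Hq Hqg. apply NNPP; intro Hn'. apply Hno; eauto.
Qed.

Lemma R_height {L : coHeyting} (xi r : L -> Prop) N :
  ~ height_ge xi N ->
  (forall q, is_prime_filter q -> strict_incl q r -> incl q xi) -> ~ height_ge r (S N).
Proof.
  intros Hxi Hr [q [Hq [Hqr Hh]]]. apply Hxi. eapply ht_sub; [|exact Hh]. apply Hr; auto.
Qed.

Lemma not_codim {L : coHeyting} (p : L -> Prop) a d :
  is_prime_filter p -> p a -> ~ height_ge p d -> codim_ge a d -> False.
Proof. intros Hp Ha Hh Hc. apply Hh, Hc; auto. Qed.

Lemma haus_prime {L : coHeyting} (b : L) :
  hausdorff L -> b <> bot -> exists p d, is_prime_filter p /\ p b /\ ~ height_ge p d.
Proof.
  intros Hh Hb. destruct (Hh b Hb) as [d Hd]. unfold codim_ge in Hd.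
  apply not_all_ex_not in Hd; destruct Hd as [p Hp].
  apply imply_to_and in Hp; destruct Hp as [Hp Hp2].
  apply imply_to_and in Hp2; destruct Hp2 as [Hpb Hph]. exists p, d; auto.
Qed.

Lemma haus_gen {L : coHeyting} (y c : L) :
  hausdorff L -> ~ le y c ->
  exists p d, is_prime_filter p /\ p (sub y c) /\ ~ p c /\ ~ height_ge p d.
Proof.
  intros Hh Hyc.
  assert (Hb : sub y c <> bot).
  { intro H. apply Hyc, sub_bot_le. rewrite H. apply le_refl. }
  destruct (haus_prime Hh Hb) as [p [d [Hp [Hpb Hph]]]].
  destruct (gen_lemma _ _ Hp Hpb) as [g [Hg [Hgp [Hgb Hgc]]]].
  exists g, d; split; auto; split; auto; split; auto.
  intro H; apply Hph. eapply ht_sub; [exact Hgp|exact H].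
Qed.

Definition is_kappa {L : coHeyting} (xi : L -> Prop) (c : L) :=
  ~ xi c /\ forall y, ~ xi y -> le y c.

Lemma kappa_S {L : coHeyting} (Sg : L -> Prop) (xi : L -> Prop) N :
  precompact L -> hausdorff L -> Sg bot -> (forall a b, Sg a -> Sg b -> Sg (join a b)) ->
  @codim_dense L Sg -> is_prime_filter xi -> ~ height_ge xi N ->
  exists c, Sg c /\ is_kappa xi c.
Proof.
  intros Hpc Hh Sbot Sjoin Sd Hxi HN.
  destruct (@pick_max L (S N) (fun z => Sg z /\ ~ xi z)) as [c [[Sc Nc] Hc]].
  - apply Hpc; lia.
  - split; auto. apply pf_bot; auto.
  - intros a b [Sa Na] [Sb Nb]; split; auto. intro H; destruct (pf_prime Hxi H); auto.
  - assert (HR : forall r, is_prime_filter r -> ~ incl r xi ->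
             (forall q, is_prime_filter q -> strict_incl q r -> incl q xi) -> r c).
    { intros r Hr Hrn Hrm.
      pose proof (R_height HN Hrm) as Hrh.
      apply not_all_ex_not in Hrn; destruct Hrn as [w Hw].
      apply imply_to_and in Hw; destruct Hw as [rw nxw].
      destruct (Sd w (S N)) as [z [Sz Hz]].
      assert (rz : r z).
      { destruct (pf_split (b:=z) Hr rw) as [H|H]; auto.
        exfalso; eapply not_codim; [exact Hr|exact H|exact Hrh|apply sdiff_l; exact Hz]. }
      assert (nz : ~ xi z).
      { intro xz. destruct (pf_split (b:=w) Hxi xz) as [H|H]; auto.
        eapply not_codim; [exact Hxi|exact H| |apply sdiff_r; exact Hz].
        intro H'; apply HN, ht_S, H'. }
      destruct (pf_split (b:=c) Hr rz) as [H|H]; auto.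
      exfalso; eapply not_codim; [exact Hr|exact H|exact Hrh|apply Hc; auto]. }
    exists c; split; auto; split; auto.
    intros y Ny. apply NNPP; intro Hyc.
    destruct (haus_gen Hh Hyc) as [g [d [Hg [Hgb [Hgc Hgh]]]]].
    assert (Hgn : ~ incl g xi).
    { intro H. apply Ny. apply (pf_up Hxi (H _ Hgb)). apply le_sub_l. }
    destruct (descent _ Hg Hgh Hgn) as [r [Hr [Hrg [Hrn Hrm]]]].
    apply Hgc, Hrg, HR; auto.
Qed.

Lemma dense_full {L : coHeyting} : @codim_dense L (fun _ : L => True).
Proof.
  intros a d. exists a; split; auto. unfold sdiff. rewrite (sub_eq_bot (le_refl a)), join_bot.
  apply codim_bot.
Qed.

Lemma xi_elem {L : coHeyting} (xi : L -> Prop) N :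
  precompact L -> hausdorff L -> is_prime_filter xi -> ~ height_ge xi N ->
  exists x c, xi x /\ (forall b, xi b -> le x b) /\ is_kappa xi c.
Proof.
  intros Hpc Hh Hxi HN.
  destruct N as [|N]; [exfalso; apply HN; simpl; auto|].
  destruct (@pick_min L (S N) xi) as [s [xs Hs]].
  - apply Hpc; lia.
  - apply pf_top; auto.
  - intros; apply pf_meet; auto.
  - destruct (@kappa_S L (fun _ => True) xi (S N) Hpc Hh I (fun _ _ _ _ => I) dense_full Hxi HN)
      as [c [_ [Nc Hc]]].
    exists (sub s c), c; split; [|split; [|split; auto]].
    + destruct (pf_split (b:=c) Hxi xs); auto. contradiction.
    + intros b xb. apply galois.
      assert (H : le (sub s b) c).
      { apply Hc. intro H. eapply not_codim; [exact Hxi|exact H|exact HN|apply Hs; auto]. }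
      apply galois in H. eapply le_trans; [exact H|]. apply join_lub; [apply le_joinr|apply le_joinl].
Qed.

Lemma cji_of {L : coHeyting} (xi : L -> Prop) x c :
  is_prime_filter xi -> xi x -> (forall b, xi b -> le x b) -> is_kappa xi c ->
  @completely_join_irreducible L x /\ @completely_meet_irreducible L c.
Proof.
  intros Hxi xx Hx [Nc Hc]. split; split.
  - intro H; subst; apply (pf_bot Hxi xx).
  - intros A t [Hub Hlub] Hxt. apply NNPP; intro Hno.
    assert (Htc : le t c).
    { apply Hlub. intros a Aa. apply Hc. intro xa. apply Hno; eauto. }
    apply Nc. apply (pf_up Hxi xx). eapply le_trans; eauto.
  - intro H; subst; apply Nc, pf_top; auto.
  - intros A t [Hlb Hglb] Htc. apply NNPP; intro Hno.
    assert (Hxt : le x t).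
    { apply Hglb. intros a Aa. apply Hx. apply NNPP; intro na. apply Hno; eauto. }
    apply Nc. apply (pf_up Hxi xx). eapply le_trans; eauto.
Qed.


Lemma dense_from_x {L : coHeyting} (Sg : L -> Prop) :
  precompact L -> Sg bot -> (forall a b, Sg a -> Sg b -> Sg (join a b)) ->
  (forall (xi : L -> Prop) N, is_prime_filter xi -> ~ height_ge xi N ->
     exists x, Sg x /\ xi x /\ forall b, xi b -> le x b) ->
  @codim_dense L Sg.
Proof.
  intros Hpc Sbot Sjoin Hx a d.
  destruct d as [|d]; [exists bot; split; auto; apply codim_0|].
  destruct (@pick_max L (S d) (fun z => Sg z /\ le z a)) as [s [[Ss sa] Hs]].
  - apply Hpc; lia.
  - split; auto; apply le_bot.
  - intros u v [Su ua] [Sv va]; split; auto; apply join_lub; auto.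
  - exists s; split; auto. unfold sdiff. rewrite (sub_eq_bot sa), join_bot.
    intros p Hp Hps. apply NNPP; intro Hph.
    destruct (gen_lemma _ _ Hp Hps) as [g [Hg [Hgp [Hgb Hgs]]]].
    assert (Hgh : ~ height_ge g (S d)) by (intro H; apply Hph; eapply ht_sub; eauto).
    destruct (Hx g (S d) Hg Hgh) as [x [Sx [gx Hxg]]].
    assert (xa : le x a) by (eapply le_trans; [apply Hxg, Hgb|apply le_sub_l]).
    destruct (pf_split (b:=s) Hg gx) as [H|H]; [contradiction|].
    eapply not_codim; [exact Hg|exact H|exact Hgh|apply Hs; auto].
Qed.

Lemma dense_from_kappa {L : coHeyting} (Sg : L -> Prop) :
  precompact L -> Sg top -> (forall a b, Sg a -> Sg b -> Sg (meet a b)) ->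
  (forall (xi : L -> Prop) N, is_prime_filter xi -> ~ height_ge xi N ->
     exists c, Sg c /\ is_kappa xi c) ->
  @codim_dense L Sg.
Proof.
  intros Hpc Stop Smeet Hk a d.
  destruct d as [|d]; [exists top; split; [auto|apply codim_0]|].
  destruct (@pick_min L (S d) (fun z => Sg z /\ le a z)) as [s [[Ss sa] Hs]].
  - apply Hpc; lia.
  - split; auto; apply le_top.
  - intros u v [Su ua] [Sv va]; split; auto; apply meet_glb; auto.
  - exists s; split; auto. unfold sdiff. rewrite (sub_eq_bot sa), joinC, join_bot.
    intros p Hp Hps. apply NNPP; intro Hph.
    destruct (gen_lemma _ _ Hp Hps) as [g [Hg [Hgp [Hgb Hga]]]].
    assert (Hgh : ~ height_ge g (S d)) by (intro H; apply Hph; eapply ht_sub; eauto).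
    destruct (Hk g (S d) Hg Hgh) as [c [Sc [Nc Hc]]].
    assert (ac : le a c) by (apply Hc; auto).
    assert (gs : g s) by (apply (pf_up Hg Hgb), le_sub_l).
    destruct (pf_split (b:=meet s c) Hg gs) as [H|H].
    + apply Nc. apply (pf_up Hg H), le_meetr.
    + eapply not_codim; [exact Hg|exact H|exact Hgh|apply Hs; split].
      * apply Smeet; auto.
      * apply meet_glb; auto.
Qed.

Lemma cji_in {L : coHeyting} (Sg : L -> Prop) x :
  precompact L -> hausdorff L -> @is_subalgebra L Sg -> @codim_dense L Sg ->
  @completely_join_irreducible L x -> Sg x.
Proof.
  intros Hpc Hh [Sbot [Stop [Sjoin [Smeet Ssub]]]] Sd [xnb Hx].
  assert (JI : forall a b, le x (join a b) -> le x a \/ le x b).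
  { intros a b Hab.
    destruct (Hx (fun z => z = a \/ z = b) (join a b)) as [z [[->| ->] Hz]]; auto.
    split.
    - intros z [-> | ->]; [apply le_joinl|apply le_joinr].
    - intros u Hu. apply join_lub; apply Hu; auto. }
  pose (px := fun z => le x z).
  assert (Hpx : is_prime_filter px).
  { unfold px; split; [apply le_top|split; [|split; [|split]]].
    - intro H. apply xnb, le_antisym; auto. apply le_bot.
    - intros; eapply le_trans; eauto.
    - intros; apply meet_glb; auto.
    - intros; apply JI; auto. }
  destruct (haus_prime Hh xnb) as [p [N [Hp [Hpx' HpN]]]].
  assert (HN : ~ height_ge px N).
  { intro H; apply HpN. eapply ht_sub; [|exact H]. intros z Hz. apply (pf_up Hp Hpx' Hz). }
  destruct (kappa_S _ Hpc Hh Sbot Sjoin Sd Hpx HN) as [c [Sc [Nc Hc]]].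
  destruct (Sd x N) as [s [Ss Hs]].
  assert (xs : le x s).
  { destruct (pf_split (b:=s) Hpx (le_refl x)) as [H|H]; auto.
    exfalso; eapply not_codim; [exact Hpx|exact H|exact HN|apply sdiff_l; exact Hs]. }
  assert (sxc : le (sub s x) c).
  { apply Hc. intro H. eapply not_codim; [exact Hpx|exact H|exact HN|apply sdiff_r; exact Hs]. }
  replace x with (sub s c); [apply Ssub; auto|].
  apply le_antisym.
  - apply galois. apply galois in sxc. eapply le_trans; [exact sxc|].
    apply join_lub; [apply le_joinr|apply le_joinl].
  - destruct (pf_split (b:=c) Hpx (le_refl x)) as [H|H]; [contradiction|].
    eapply le_trans; [exact H|]. apply sub_monol; auto.
Qed.

Lemma cmi_in {L : coHeyting} (Sg : L -> Prop) c :
  precompact L -> hausdorff L -> @is_subalgebra L Sg -> @codim_dense L Sg ->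
  @completely_meet_irreducible L c -> Sg c.
Proof.
  intros Hpc Hh [Sbot [Stop [Sjoin [Smeet Ssub]]]] Sd [cnt Hc].
  pose (A := fun z : L => exists (r : L -> Prop) N, is_prime_filter r /\ ~ height_ge r N /\
    ~ r c /\ is_kappa r z).
  destruct (Hc A c) as [z [[r [N [Hr [HN [Nrc [Nrz Hrz]]]]]] zc]].
  - split.
    + intros z [r [N [Hr [HN [Nrc [Nrz Hrz]]]]]]. auto.
    + intros u Hu. apply NNPP; intro Huc.
      destruct (haus_gen Hh Huc) as [g [d [Hg [Hgb [Hgc Hgh]]]]].
      destruct (kappa_S _ Hpc Hh I (fun _ _ _ _ => I) dense_full Hg Hgh) as [k [_ [Nk Hk]]].
      assert (uk : le u k) by (apply Hu; exists g, d; split; [exact Hg|split; [exact Hgh|split; [exact Hgc|split; [exact Nk|exact Hk]]]]).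
      apply Nk. apply (pf_up Hg (pf_up Hg Hgb (le_sub_l u c)) uk).
  - apply le_refl.
  - assert (cz : le c z) by (apply Hrz; auto).
    destruct (kappa_S _ Hpc Hh Sbot Sjoin Sd Hr HN) as [k [Sk [Nk Hk]]].
    replace c with k; auto.
    apply le_antisym.
    + eapply le_trans; [apply Hrz; exact Nk|exact zc].
    + eapply le_trans; [exact cz|apply Hk; exact Nrz].
Qed.


Lemma gen_sub {L : coHeyting} (X : L -> Prop) : @is_subalgebra L (@generated L X).
Proof.
  split; [apply gen_bot|split; [apply gen_top|split; [|split]]]; intros;
    [apply gen_join|apply gen_meet|apply gen_sub]; auto.
Qed.

Lemma gen_min {L : coHeyting} (X Sg : L -> Prop) :
  @is_subalgebra L Sg -> (forall x, X x -> Sg x) -> forall x, @generated L X x -> Sg x.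
Proof.
  intros [Sbot [Stop [Sjoin [Smeet Ssub]]]] HX x Hx.
  induction Hx; auto.
Qed.

Theorem proposition6p12 (L : coHeyting) :
  precompact L -> hausdorff L ->
  (forall x : L, @generated L (@completely_join_irreducible L) x <->
                 @generated L (@completely_meet_irreducible L) x) /\
  @is_subalgebra L (@generated L (@completely_join_irreducible L)) /\
  @codim_dense L (@generated L (@completely_join_irreducible L)) /\
  (forall S : L -> Prop, @is_subalgebra L S -> @codim_dense L S ->
     forall x : L, @generated L (@completely_join_irreducible L) x -> S x).
Proof.
  intros Hpc Hh.
  assert (D1 : @codim_dense L (@generated L (@completely_join_irreducible L))).
  { apply dense_from_x; auto; [apply gen_bot|intros; apply gen_join; auto|].
    intros xi N Hxi HN. destruct (xi_elem _ Hpc Hh Hxi HN) as [x [c [xx [Hx Hk]]]].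
    exists x; split; auto. apply gen_base. apply (cji_of Hxi xx Hx Hk). }
  assert (D2 : @codim_dense L (@generated L (@completely_meet_irreducible L))).
  { apply dense_from_kappa; auto; [apply gen_top|intros; apply gen_meet; auto|].
    intros xi N Hxi HN. destruct (xi_elem _ Hpc Hh Hxi HN) as [x [c [xx [Hx Hk]]]].
    exists c; split; auto. apply gen_base. apply (cji_of Hxi xx Hx Hk). }
  split; [|split; [apply gen_sub|split; [exact D1|]]].
  - intro x; split; apply gen_min; try apply gen_sub.
    + intros y Hy. eapply cji_in; eauto. apply gen_sub.
    + intros y Hy. eapply cmi_in; eauto. apply gen_sub.
  - intros Sg HS HD. apply gen_min; auto. intros y Hy. eapply cji_in; eauto.
Qed.
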